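(* Let $A\in\mathbb{R}^{n\times n}$, $\vec{x}_0\in\mathbb{R}^n$, and $\vec{x}_{t+1}=A\vec{x}_t$ for $t=0,1,2,\ldots$. For $j\ge 0$ let $X_j=[\vec{x}_0\ \vec{x}_1\ \cdots\ \vec{x}_j]\in\mathbb{R}^{n\times(j+1)}$ and $Y_j=[\vec{x}_1\ \vec{x}_2\ \cdots\ \vec{x}_{j+1}]$, and let $\hat{A}_j=Y_jX_j^{\dagger}$. Let $k$ be an integer with $1\le k<n$. Let $U_{k-1}$ be the matrix whose columns are the left singular vectors of $X_{k-1}$ corresponding to its nonzero singular values (economic SVD), so that $X_{k-1}X_{k-1}^{\dagger}=U_{k-1}U_{k-1}^\top$, and define $$S_k=I-U_{k-1}U_{k-1}^\top,\qquad P_k=\vec{x}_k\vec{x}_k^\top=A^k\vec{x}_0\vec{x}_0^\top (A^k)^\top .$$ Assume $\mathrm{Tr}(S_kP_k)\neq 0$. Then $\hat{A}_k=A(I-E_k)$, where $$E_k=\left(I-\frac{S_kP_k}{\mathrm{Tr}(S_kP_k)}\right)S_k,$$ and moreover $$\|E_k\|_2\le\left\|I-\frac{S_kP_k}{\mathrm{Tr}(S_kP_k)}\right\|_2 .$$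
   Context: $M^{\dagger}$ denotes the Moore–Penrose pseudo-inverse of $M$; $\hat{A}_j$ is the least-squares solution of $\min_A\|Y_j-AX_j\|_F$. $\|\cdot\|_2$ is the spectral norm and $\mathrm{Tr}$ the trace. $I$ is the $n\times n$ identity. *)

(* Defs.v *)
From HB Require Import structures.
From mathcomp Require Import all_boot all_order all_algebra.
From mathcomp Require Import boolp classical_sets reals.
Set Implicit Arguments. Unset Strict Implicit. Unset Printing Implicit Defensive.
Import Order.TTheory GRing.Theory Num.Theory.
Local Open Scope ring_scope.
Local Open Scope classical_set_scope.

Definition traj (R : pzRingType) (n : nat) (A : 'M[R]_n) (x0 : 'cV[R]_n) (t : nat)
  : 'cV[R]_n := A ^+ t *m x0.

Definition Xmat (R : pzRingType) (n : nat) (A : 'M[R]_n) (x0 : 'cV[R]_n) (j : nat)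
  : 'M[R]_(n, j.+1) := \matrix_(i < n, t < j.+1) traj A x0 t i 0.
Definition Ymat (R : pzRingType) (n : nat) (A : 'M[R]_n) (x0 : 'cV[R]_n) (j : nat)
  : 'M[R]_(n, j.+1) := \matrix_(i < n, t < j.+1) traj A x0 t.+1 i 0.

(* P is the Moore-Penrose pseudo-inverse of M (the four Penrose equations;
   over the reals the conjugate transpose is the transpose). *)
Definition is_MP_pinv (R : pzRingType) (m n : nat) (M : 'M[R]_(m, n)) (P : 'M[R]_(n, m))
  : Prop :=
  [/\ M *m P *m M = M, P *m M *m P = P,
      (M *m P)^T = M *m P & (P *m M)^T = P *m M].

Definition econ_svd (R : numDomainType) (m n r : nat) (M : 'M[R]_(m, n))
  (U : 'M[R]_(m, r)) (sigma : 'rV[R]_r) (V : 'M[R]_(n, r)) : Prop :=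
  [/\ M = U *m diag_mx sigma *m V^T, U^T *m U = 1%:M, V^T *m V = 1%:M
    & forall i, 0 < sigma 0 i].

Definition norm2 (R : realType) (n : nat) (v : 'cV[R]_n) : R :=
  Num.sqrt (\sum_(i < n) v i 0 ^+ 2).

Definition spec_norm (R : realType) (m n : nat) (M : 'M[R]_(m, n)) : R :=
  sup [set norm2 (M *m v) | v in [set v : 'cV[R]_n | norm2 v <= 1]].

(* Main.v *)
Require Import Defs.
From HB Require Import structures.
From mathcomp Require Import all_boot all_order all_algebra.
From mathcomp Require Import boolp classical_sets reals.
From mathcomp Require Import lra.
Import Order.TTheory GRing.Theory Num.Theory.
Local Open Scope ring_scope.

Section H.
Variable R : realType.

Lemma Xmat_entry n (A : 'M[R]_n) x0 j (Q : 'M[R]_n) i (t : 'I_j.+1) :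
  (Q *m Xmat A x0 j) i t = (Q *m traj A x0 t) i 0.
Proof. rewrite !mxE; apply: eq_bigr => l _; by rewrite mxE. Qed.

Lemma Xmat_cols n (A : 'M[R]_n) x0 j (Q : 'M[R]_n) :
  (Q *m Xmat A x0 j = Xmat A x0 j) <->
  (forall t, (t < j.+1)%N -> Q *m traj A x0 t = traj A x0 t).
Proof.
split.
- move=> H t ht; apply/matrixP => i c; rewrite (ord1 c).
  have := congr1 (fun M : 'M[R]_(n, j.+1) => M i (Ordinal ht)) H; rewrite /= Xmat_entry /=.
  rewrite mxE /=; move=> ->; by rewrite mxE.
- move=> H; apply/matrixP => i t; by rewrite Xmat_entry H ?ltn_ord // [RHS]mxE.
Qed.

Lemma Ymat_eq n (A : 'M[R]_n) x0 j : Ymat A x0 j = A *m Xmat A x0 j.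
Proof.
apply/matrixP => i t; rewrite Xmat_entry [LHS]mxE /traj exprS -mulmxA.
by [].
Qed.

Lemma sumsq n (w : 'cV[R]_n) : (w^T *m w) 0 0 = \sum_i w i 0 ^+ 2.
Proof. rewrite mxE; apply: eq_bigr => i _; by rewrite mxE expr2. Qed.

Lemma norm2_sq n (w : 'cV[R]_n) : norm2 w ^+ 2 = (w^T *m w) 0 0.
Proof. rewrite sumsq /norm2 sqr_sqrtr //; apply: sumr_ge0 => i _; exact: sqr_ge0. Qed.

Lemma coord_le1 n (v : 'cV[R]_n) j : norm2 v <= 1 -> `|v j 0| <= 1.
Proof.
move=> hv.
have hs : \sum_i v i 0 ^+ 2 <= 1.
  by rewrite -(ler_sqrt _ ler01) sqrtr1.
have hj : v j 0 ^+ 2 <= \sum_i v i 0 ^+ 2.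
  rewrite (bigD1 j) //= lerDl; apply: sumr_ge0 => i _; exact: sqr_ge0.
have h1 : `|v j 0| ^+ 2 <= 1 by rewrite real_normK ?num_real //; apply: le_trans hj hs.
have h0 : 0 <= `|v j 0| by [].
nra.
Qed.

Lemma norm2_bound n (M : 'M[R]_n) (v : 'cV[R]_n) : norm2 v <= 1 ->
  norm2 (M *m v) <= Num.sqrt (\sum_i (\sum_j `|M i j|) ^+ 2).
Proof.
move=> hv; rewrite /norm2 ler_sqrt; last by apply: sumr_ge0 => i _; exact: sqr_ge0.
apply: ler_sum => i _.
set a := (M *m v) i 0; set C := \sum_j `|M i j|.
have ha : `|a| <= C.
  rewrite /a mxE; apply: le_trans (ler_norm_sum _ _ _) _.
  apply: ler_sum => j _; rewrite normrM; apply: ler_piMr => //; exact: coord_le1.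
have h0 : 0 <= `|a| by [].
rewrite -real_normK ?num_real //; nra.
Qed.

Lemma bounded_set n (M : 'M[R]_n) :
  has_sup [set norm2 (M *m v) | v in [set v : 'cV[R]_n | norm2 v <= 1]].
Proof.
split.
  exists (norm2 (M *m 0)); exists 0 => //=; rewrite /norm2.
  rewrite (eq_bigr (fun=> 0)); last by move=> i _; rewrite mxE expr0n.
  by rewrite big1 // sqrtr0.
exists (Num.sqrt (\sum_i (\sum_j `|M i j|) ^+ 2)) => y [v hv <-].
exact: norm2_bound.
Qed.

Lemma proj_eq n m (M : 'M[R]_(n,m)) (Mp : 'M_(m,n)) (Pi : 'M_n) :
  is_MP_pinv M Mp -> Pi^T = Pi -> Pi *m M = M -> (M *m Mp) *m Pi = Pi ->
  M *m Mp = Pi.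
Proof.
move=> [_ _ h3 _] hPi hPM hPP.
have e : Pi *m (M *m Mp) = M *m Mp by rewrite mulmxA hPM.
by rewrite -h3 -e trmx_mul h3 hPi hPP.
Qed.

End H.

Theorem theorem1 (R : realType) (n : nat) (A : 'M[R]_n) (x0 : 'cV[R]_n) (k : nat)
  (hk1 : (1 <= k)%N) (hkn : (k < n)%N)
  (r : nat) (U : 'M[R]_(n, r)) (sigma : 'rV[R]_r) (V : 'M[R]_(k.-1.+1, r))
  (hsvd : econ_svd (Xmat A x0 k.-1) U sigma V)
  (Xkp : 'M[R]_(k.+1, n)) (hXkp : is_MP_pinv (Xmat A x0 k) Xkp) :
  let S := 1%:M - U *m U^T in
  let P := traj A x0 k *m (traj A x0 k)^T in
  \tr (S *m P) != 0 ->
  let B := 1%:M - (\tr (S *m P))^-1 *: (S *m P) in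
  let E := B *m S in
  Ymat A x0 k *m Xkp = A *m (1%:M - E) /\ spec_norm E <= spec_norm B.
Proof.
move=> S P hc B E.
have eS : S = 1%:M - U *m U^T by [].
have eP : P = traj A x0 k *m (traj A x0 k)^T by [].
have eB : B = 1%:M - (\tr (S *m P))^-1 *: (S *m P) by [].
have eE : E = B *m S by [].
clearbody E B P S.
case: hsvd => hX hU hV hsig.
set X' := Xmat A x0 k.-1 in hX.
set x := traj A x0 k.
set c := \tr (S *m P).
have ST : S^T = S by rewrite eS linearB /= trmx1 trmx_mul trmxK.
have SU : S *m U = 0 by rewrite eS mulmxBl mul1mx -mulmxA hU mulmx1 subrr.
have SS : S *m S = S by rewrite {2}eS mulmxBr mulmx1 mulmxA SU mul0mx subr0.
have SX : S *m X' = 0 by rewrite hX !mulmxA SU !mul0mx.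
have UUX : U *m U^T *m X' = X' by rewrite hX !mulmxA -(mulmxA U) hU mulmx1.
have Sx : S *m x = x - U *m (U^T *m x) by rewrite eS mulmxBl mul1mx mulmxA.
have cM : x^T *m (S *m x) = c%:M.
  apply/matrixP => i j; rewrite !ord1 [RHS]mxE eqxx mulr1n.
  rewrite /c eP [in RHS]mulmxA [in RHS]mxtrace_mulC /mxtrace big_ord1 //.
pose Pi := U *m U^T + c^-1 *: (S *m x *m x^T *m S).
have PiT : Pi^T = Pi.
  by rewrite /Pi linearD linearZ /= !trmx_mul !trmxK ST !mulmxA.
have Pix : Pi *m x = x.
  rewrite /Pi mulmxDl -scalemxAl -[S *m x *m x^T *m S *m x]mulmxA -(mulmxA (S *m x)) cM mul_mx_scalar.
  rewrite scalerA mulVf // scale1r Sx mulmxA addrC subrK //.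
have PiX : Pi *m X' = X'.
  by rewrite /Pi mulmxDl UUX -scalemxAl -[S *m x *m x^T *m S *m X']mulmxA SX mulmx0 scaler0 addr0.
have PiM : Pi *m Xmat A x0 k = Xmat A x0 k.
  apply/Xmat_cols => t ht.
  have [htk|htk] := ltnP t k.
    have := (proj1 (@Xmat_cols R n A x0 k.-1 Pi) PiX t); rewrite prednK //; exact.
  have -> : t = k by apply/eqP; rewrite eqn_leq htk -ltnS ht.
  exact: Pix.
set Pp := Xmat A x0 k *m Xkp.
have PpM : Pp *m Xmat A x0 k = Xmat A x0 k by case: hXkp.
have Ppt := proj1 (@Xmat_cols R n A x0 k Pp) PpM.
have PpX : Pp *m X' = X'.
  apply/Xmat_cols => t ht; apply: Ppt; rewrite (prednK hk1) in ht; exact: ltnW.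
pose Dinv := diag_mx (\row_i (sigma 0 i)^-1).
have DD : diag_mx sigma *m Dinv = 1%:M.
  apply/matrixP => i j; rewrite mul_diag_mx !mxE.
  case: eqVneq => [->|]; last by rewrite !mulr0n mulr0.
  by rewrite !mulr1n mulfV // gt_eqF.
have Ueq : U = X' *m (V *m Dinv).
  by rewrite mulmxA hX -!mulmxA (mulmxA V^T) hV mul1mx DD mulmx1.
have PpU : Pp *m U = U by rewrite {1}Ueq mulmxA PpX -Ueq.
have Ppx : Pp *m x = x by apply: Ppt.
have PpPi : Pp *m Pi = Pi.
  have PpSx : Pp *m (S *m x) = S *m x by rewrite Sx mulmxBr Ppx (mulmxA Pp U) PpU.
  have h2 : Pp *m (S *m x *m x^T *m S) = S *m x *m x^T *m S.
    by rewrite (mulmxA Pp (S *m x *m x^T)) (mulmxA Pp (S *m x)) PpSx.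
  by rewrite /Pi mulmxDr mulmxA PpU -scalemxAr h2.
have hPP : Pp = Pi by apply: proj_eq.
split.
  rewrite Ymat_eq -mulmxA -/Pp hPP; congr (_ *m _).
  have hUU : U *m U^T = 1%:M - S by rewrite eS opprB addrC subrK.
  rewrite eE eB /Pi mulmxBl mul1mx -scalemxAl hUU -/c eP !mulmxA.
  by rewrite opprB addrA addrAC.
have Snorm : forall v : 'cV[R]_n, norm2 (S *m v) <= norm2 v.
  move=> v; rewrite /norm2 ler_sqrt; last by apply: sumr_ge0 => i _; exact: sqr_ge0.
  rewrite -!sumsq.
  have -> : (S *m v)^T *m (S *m v) = v^T *m v - (U^T *m v)^T *m (U^T *m v).
    rewrite !trmx_mul ST trmxK mulmxA -(mulmxA v^T S S) SS eS mulmxBr mulmxBl mulmx1.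
    by rewrite !mulmxA.
  have eM : forall a b : 'M[R]_1, (a - b) 0 0 = a 0 0 - b 0 0 by move=> a b; rewrite !mxE.
  rewrite eM gerBl sumsq.
  by apply: sumr_ge0 => i _; exact: sqr_ge0.
rewrite /spec_norm; apply: ge_sup.
  by exists (norm2 (E *m 0)); exists 0 => //=; rewrite /norm2 (eq_bigr (fun=> 0)) ?big1 ?sqrtr0 // => i _; rewrite mxE expr0n.
move=> y [v hv <-].
apply: sup_upper_bound; first exact: bounded_set.
exists (S *m v); first by rewrite /= (le_trans (Snorm v)).
by rewrite eE mulmxA.
Qed.
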